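(* Let $V$ be a finite set, $\mu\colon\binom V2\to\mathbb{Z}_+$, $e=\{v_1,v_2\}\in\binom V2$, $r=\mu(e)$, and let $\mu_1\colon\binom V2\to\mathbb{Z}_+$ agree with $\mu$ except that $\mu_1(e)=1$. Then \[ n(\mu,V)=r\,n(\mu_1,V)+(r-1)\big[n(\mu,V\setminus\{v_1\})+n(\mu,V\setminus\{v_2\})+n(\mu,V\setminus\{v_1,v_2\})\big], \] where $n(\mu,W)$ for $W\subseteq V$ means $n$ of the restriction of $\mu$ to $\binom W2$.
   Context: For a finite set $W$ with $|W|=m$ and $\mu\colon\binom W2\to\mathbb{Z}_+$, $n(\mu,W)=\sum_{J\subseteq W,|J|\geqslant2}(-1)^{m-|J|}\prod_{e\in\binom J2}\mu(e)+(-1)^{m-1}(m-1)$. (This is the number of $(m-1)$-spheres in the wedge to which the edge inflation $(\Delta_W)_\mu$ of the full simplex on $W$ is homotopy equivalent; e.g. $n(\mu,\varnothing)=1$.) *)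

(* Defs.v *)
From mathcomp Require Import all_boot all_order all_algebra.
Set Implicit Arguments. Unset Strict Implicit. Unset Printing Implicit Defensive.
Import Order.TTheory GRing.Theory Num.Theory.
Local Open Scope ring_scope.

(* An edge multiplicity mu : binom(V,2) -> Z_+ is represented as a function
   on subsets of V; only its values on 2-element subsets matter. *)

(* The sign (-1)^(|W|-1) is written (-1)^+(|W|+1) so that the
   case W = empty set gives (-1)^(-1) * (-1) = 1 correctly. *)
Definition nmu (V : finType) (mu : {set V} -> nat) (W : {set V}) : int :=
  \sum_(J in powerset W | (1 < #|J|)%N)
     (-1) ^+ (#|W| - #|J|) * \prod_(E in powerset J | #|E| == 2%N) (mu E)%:Z
  + (-1) ^+ (#|W|.+1) * ((#|W|)%:Z - 1).

(* Main.v *)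
Require Import Defs.
From mathcomp Require Import all_boot all_order all_algebra.
From mathcomp Require Import ring.
Import Order.TTheory GRing.Theory Num.Theory.
Set Implicit Arguments. Unset Strict Implicit.
Local Open Scope ring_scope.

Lemma sgnB (a b : nat) : (b <= a)%N -> (-1 : int) ^+ (a - b) = (-1) ^+ a * (-1) ^+ b.
Proof.
move=> h; rewrite -{2}(subnK h) exprD -mulrA -exprMn mulrNN mulr1 expr1n mulr1 //.
Qed.

Definition Pm (V : finType) (mu : {set V} -> nat) (J : {set V}) : int :=
  \prod_(E in powerset J | #|E| == 2%N) (mu E)%:Z.
Definition gm (V : finType) (mu : {set V} -> nat) (J : {set V}) : int :=
  if (1 < #|J|)%N then (-1) ^+ #|J| * Pm mu J else 0.

Lemma nmuE (V : finType) (mu : {set V} -> nat) (W : {set V}) :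
  nmu mu W = (-1) ^+ #|W| * \sum_(J : {set V}) (if J \subset W then gm mu J else 0)
     + (-1) ^+ (#|W|.+1) * ((#|W|)%:Z - 1).
Proof.
rewrite /nmu; congr (_ + _).
rewrite big_mkcondr /= big_mkcond /= mulr_sumr; apply: eq_bigr => J _.
rewrite powersetE /gm; case: ifP => sub; last by rewrite mulr0.
case: ifP => _; last by rewrite mulr0.
by rewrite sgnB ?subset_leq_card // -mulrA.
Qed.

Lemma PmE (V : finType) (mu mu1 : {set V} -> nat) (v1 v2 : V) (J : {set V}) :
  v1 != v2 ->
  (forall E : {set V}, #|E| = 2%N -> E != [set v1; v2] -> mu1 E = mu E) ->
  mu1 [set v1; v2] = 1%N ->
  Pm mu J = if (v1 \in J) && (v2 \in J) then (mu [set v1; v2])%:Z * Pm mu1 J else Pm mu1 J.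
Proof.
move=> ne h1 he; rewrite /Pm; case: ifP => hJ.
  have hP : ([set v1; v2] \in powerset J) && (#|[set v1; v2]| == 2%N).
    rewrite powersetE cards2 ne eqxx andbT subUset !sub1set.
    by case/andP: hJ => -> ->.
  rewrite (bigD1 [set v1; v2] hP) [in RHS](bigD1 [set v1; v2] hP) /= he mul1r; congr (_ * _).
  apply: eq_bigr => E /andP[/andP[_ c2] nE]; rewrite h1 //; exact/eqP.
apply: eq_bigr => E /andP[pE c2]; rewrite h1 //; first exact/eqP.
apply/eqP => hE; move: pE hJ; rewrite hE powersetE subUset !sub1set => /andP[-> ->].
by [].
Qed.

Theorem lemma4p4 (V : finType) (mu mu1 : {set V} -> nat) (v1 v2 : V) :
  v1 != v2 ->
  (forall E : {set V}, #|E| = 2%N -> (0 < mu E)%N) ->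
  (forall E : {set V}, #|E| = 2%N -> (0 < mu1 E)%N) ->
  (forall E : {set V}, #|E| = 2%N -> E != [set v1; v2] -> mu1 E = mu E) ->
  mu1 [set v1; v2] = 1%N ->
  nmu mu [set: V] =
    (mu [set v1; v2])%:Z * nmu mu1 [set: V]
    + ((mu [set v1; v2])%:Z - 1) *
      (nmu mu ([set: V] :\ v1) + nmu mu ([set: V] :\ v2)
       + nmu mu ([set: V] :\: [set v1; v2])).
Proof.
move=> ne _ _ h1 he.
set r := (mu [set v1; v2])%:Z.
have hg J : gm mu J = if (v1 \in J) && (v2 \in J) then r * gm mu1 J else gm mu1 J.
  rewrite /gm (PmE J ne h1 he); case: ifP; case: ifP => //; rewrite ?mulr0 // => *.
  by rewrite mulrCA.
clearbody r.
have [k hk] : exists k, #|V| = k.+2.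
  exists (#|V| - 2)%N; rewrite -addn2 subnK //.
  by have := subset_leq_card (subsetT [set v1; v2]); rewrite cards2 ne cardsT.
have cV1 : #|[set: V] :\ v1| = k.+1.
  by have := cardsD1 v1 [set: V]; rewrite in_setT cardsT hk add1n => -[].
have cV2 : #|[set: V] :\ v2| = k.+1.
  by have := cardsD1 v2 [set: V]; rewrite in_setT cardsT hk add1n => -[].
have cV12 : #|[set: V] :\: [set v1; v2]| = k.
  by rewrite cardsD setTI cards2 ne cardsT hk subSS subSS subn0.
have e12 : [set: V] :\: [set v1; v2] = [set: V] :\ v1 :\ v2 by rewrite setDDl.
rewrite !nmuE !cardsT hk cV1 cV2 cV12 e12.
have eA (m : {set V} -> nat) : \sum_(J : {set V}) (if J \subset [set: V] then gm m J else 0)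
   = \sum_(J : {set V}) gm m J by apply: eq_bigr => J _; rewrite subsetT.
rewrite !eA.
set A := \sum_(J : {set V}) gm mu J.
set B := \sum_(J : {set V}) gm mu1 J.
set C1 := \sum_(J : {set V}) _.
set C2 := \sum_(J : {set V}) _.
set C12 := \sum_(J : {set V}) _.
have H : (-1) ^+ k.+2 * A = r * ((-1) ^+ k.+2 * B) + (r - 1) * ((-1) ^+ k.+1 * C1 + (-1) ^+ k.+1 * C2 + (-1) ^+ k * C12) :> int.
  rewrite /A /B /C1 /C2 /C12 !mulr_sumr -!big_split /= !mulr_sumr -!big_split /=.
  apply: eq_bigr => J _; rewrite hg !subsetD1 subsetT.
  case: (v1 \in J); case: (v2 \in J) => /=; rewrite !exprS; ring.
rewrite H !exprS !intS; ring.
Qed.
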